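(* Let $\delta$ be a symbolic ultrametric on a nonempty finite set $X$. Then its graph representation $G_\delta$ is a complete edge-colored permutation graph.
   Context: For a nonempty finite set $X$ and $k\in\mathbb{N}$, a surjective map $\delta:X\times X\to\{1,\dots,k\}$ is a symbolic ultrametric if (U1) $\delta(x,y)=\delta(y,x)$ for all $x,y$; (U2) $|\{\delta(x,y),\delta(x,z),\delta(y,z)\}|\le2$ for all $x,y,z$; (U3) there is no 4-element subset $\{x,y,u,v\}$ of $X$ with $\delta(x,y)=\delta(y,u)=\delta(u,v)\ne\delta(v,y)=\delta(x,v)=\delta(x,u)$. Its graph representation $G_\delta$ is the complete graph on $X$ in which each edge $\{x,y\}$ ($x\neq y$) receives color $\delta(x,y)$. A complete edge-colored graph $G=(V,E_1,\dots,E_k)$ is a complete graph on finite $V$ with edges partitioned into nonempty color classes $E_i$; $G_{|i}=(V,E_i)$. A labeling is a bijection $\ell:V\to\{1,\dots,|V|\}$. A graph $(V,E)$ with labeling $\ell$ is a simple permutation graph of a permutation $\pi$ if for all $u,v$ with $\ell(u)>\ell(v)$: $\{u,v\}\in E$ iff $\pi^{-1}(\ell(u))<\pi^{-1}(\ell(v))$. $G$ is a complete edge-colored permutation graph if there exist a labeling $\ell$ and permutations $\pi_1,\dots,\pi_k$ with $(G_{|i},\ell)$ a simple permutation graph of $\pi_i$ for all $i$. *)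

(* Defs.v *)
From mathcomp Require Import all_boot all_fingroup.
Set Implicit Arguments. Unset Strict Implicit. Unset Printing Implicit Defensive.

Definition symbolic_ultrametric (X : finType) (k : nat) (d : X -> X -> nat) : Prop :=
  [/\ (forall x y, 1 <= d x y <= k),
      (forall c, 1 <= c <= k -> exists x y, d x y = c),
      (forall x y, d x y = d y x),
      (forall x y z, size (undup [:: d x y; d x z; d y z]) <= 2)
    & ~ (exists x y u v : X, uniq [:: x; y; u; v] /\
          [/\ d x y = d y u, d y u = d u v, d u v <> d v y,
              d v y = d x v & d x v = d x u])].

(* Graph representation G_d: complete graph on X, edge {x,y} (x <> y)
   coloured d x y.  Its colour class E_i as an edge relation. *)
Definition graph_rep_class (X : finType) (d : X -> X -> nat) (i : nat) : rel X :=
  fun x y => (x != y) && (d x y == i).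

(* (V,E) with labeling l : V -> 'I_n (0-based version of {1..n}) is a simple
   permutation graph of the permutation p of 'I_n. *)
Definition simple_perm_graph (V : finType) (n : nat) (E : rel V)
    (l : V -> 'I_n) (p : 'S_n) : Prop :=
  forall u v : V, l v < l u -> (E u v <-> ((p^-1)%g (l u) < (p^-1)%g (l v))).

Definition complete_edge_colored_perm_graph (V : finType) (k : nat)
    (E : nat -> rel V) : Prop :=
  exists l : V -> 'I_#|V|, bijective l /\
    exists pi : nat -> 'S_#|V|,
      forall i, 1 <= i <= k -> simple_perm_graph (E i) l (pi i).

(* Main.v *)
Require Import Defs.
From mathcomp Require Import all_boot all_fingroup.
From mathcomp Require Import zify.
Set Implicit Arguments. Unset Strict Implicit. Unset Printing Implicit Defensive.

Lemma undup3 (p q r : nat) : size (undup [:: p; q; r]) <= 2 -> [\/ p = q, p = r | q = r].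
Proof.
case: (eqVneq p q) => [->|pq]; first by constructor 1.
case: (eqVneq p r) => [->|pr]; first by constructor 2.
case: (eqVneq q r) => [->|qr]; first by constructor 3.
by rewrite /= !inE (negbTE pq) (negbTE pr) (negbTE qr).
Qed.

Definition U2 (X : finType) (d : X -> X -> nat) :=
  forall x y z, size (undup [:: d x y; d x z; d y z]) <= 2.
Definition U3 (X : finType) (d : X -> X -> nat) :=
  ~ (exists x y u v : X, uniq [:: x; y; u; v] /\
          [/\ d x y = d y u, d y u = d u v, d u v <> d v y,
              d v y = d x v & d x v = d x u]).

Lemma helperH (X : finType) (d : X -> X -> nat) (x a y w : X) c e :
  (forall x y, d x y = d y x) -> U2 d -> U3 d -> c != e ->
  d x a = c -> d x y = e -> d a w = c -> d w y = c -> d x w = e ->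
  x != a -> x != w -> x != y -> w != y -> d a y = c.
Proof.
move=> sym u2 u3 ce xa xy aw wy xw nxa nxw nxy nwy.
have := u2 x a y; move/undup3; rewrite xa xy.
case=> [E|E|E]; first by rewrite E eqxx in ce.
  by [].
exfalso; apply: u3; exists x, a, w, y; split.
  rewrite /= !inE !negb_or nxa nxw nxy nwy /= andbT.
  have -> : a != w by apply/eqP=> E'; rewrite E' xw in xa; rewrite xa eqxx in ce.
  have -> : a != y by apply/eqP=> E'; rewrite E' xy in xa; rewrite xa eqxx in ce.
  by [].
split; rewrite ?aw ?wy ?xy ?xw ?(sym y a) -?E //.
by apply/eqP.
Qed.
Lemma split_ex (X : finType) (d : X -> X -> nat) :
  (forall x y, d x y = d y x) -> U2 d -> U3 d ->
  forall n (S : {set X}), #|S| = n.+2 -> exists (A : {set X}) c,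
   [/\ A \subset S, A != set0, S :\: A != set0 &
       forall a b, a \in A -> b \in S :\: A -> d a b = c].
Proof.
move=> sym u2 u3; elim=> [|n IH] S cS.
  have /cards2P [x [y [xy ->]]] : #|S| == 2 by rewrite cS.
  exists [set x], (d x y); split.
  - by rewrite sub1set !inE eqxx.
  - by apply/set0Pn; exists x; rewrite inE.
  - by apply/set0Pn; exists y; rewrite !inE eqxx orbT andbT eq_sym.
  - move=> a b; rewrite !inE => /eqP -> /andP [bx /orP [/eqP bx'|/eqP ->//]].
    by rewrite bx' eqxx in bx.
have [x xS] : exists x, x \in S by apply/set0Pn; rewrite -card_gt0 cS.
set Y := S :\ x.
have cY : #|Y| = n.+2 by move: cS; rewrite (cardsD1 x) xS => -[].
have xY : x \notin Y by rewrite !inE eqxx.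
have YS : Y \subset S by apply: subD1set.
have [A [c [AY A0 YA0 Ac]]] := IH Y cY.
set B := Y :\: A.
have AS : A \subset S by apply: subset_trans YS.
have xA : x \notin A by apply/negP => /(subsetP AY); rewrite (negbTE xY).
case: (boolP [forall a in A, d x a == c]) => [/forall_inP HA|nA].
  exists A, c; split => //.
    by apply/set0Pn; exists x; rewrite inE xA xS.
  move=> a b aA; rewrite inE => /andP [bA bS].
  case: (eqVneq b x) => [->|bx]; first by rewrite sym; apply/eqP/HA.
  by apply: Ac => //; rewrite !inE bA bx bS.
case: (boolP [forall b in B, d x b == c]) => [/forall_inP HB|nB].
  exists B, c; split.
  - by apply: subset_trans (subsetDl _ _) YS.
  - exact: YA0.
  - by case/set0Pn: A0 => a aA; apply/set0Pn; exists a;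
      rewrite !inE aA /= ?andbT (subsetP AS).
  move=> b z bB; rewrite inE => /andP [zB zS].
  case: (eqVneq z x) => [->|zx]; first by rewrite sym; apply/eqP/HB.
  have zA : z \in A by move: zB; rewrite !inE zx zS /= andbT negbK.
  by rewrite sym; apply: Ac.
case/forall_inPn: nA => a0 a0A /negP a0c.
case/forall_inPn: nB => b0 b0B /negP b0c.
have a0b0 : d a0 b0 = c by apply: Ac.
have [e xa0] : exists e, d x a0 = e by eexists.
have ce : c != e by rewrite -xa0 eq_sym; apply/negP.
have xb0 : d x b0 = e.
  case: (undup3 (u2 x a0 b0)) => [E|E|E]; first by rewrite -E.
    by rewrite -xa0 E a0b0 eqxx in ce.
  by rewrite E a0b0 eqxx in b0c.
have b0Y : b0 \in Y by move: b0B; rewrite inE => /andP [].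
have b0A : b0 \notin A by move: b0B; rewrite inE => /andP [].
have a0Y : a0 \in Y by apply: (subsetP AY).
have F : forall y, y \in Y -> d x y != c -> d x y = e.
  move=> y yY yc; case: (boolP (y \in A)) => yA.
    have yb0 : d y b0 = c by apply: Ac => //; rewrite inE b0A.
    case: (undup3 (u2 x y b0)) => [|E|E]; first by rewrite xb0.
      by rewrite E yb0 eqxx in yc.
    by rewrite -xb0 E yb0 eqxx in ce.
  have ya0 : d y a0 = c by rewrite sym; apply: Ac => //; rewrite inE yA.
  case: (undup3 (u2 x y a0)) => [E|E|E]; first by rewrite E xa0.
    by rewrite E ya0 eqxx in yc.
  by rewrite -xa0 E ya0 eqxx in ce.
set A' := [set y in Y | d x y == c].
case: (eqVneq A' set0) => [A'0|A'n0].
  exists [set x], e; split.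
  - by rewrite sub1set.
  - by apply/set0Pn; exists x; rewrite inE.
  - by apply/set0Pn; exists a0; rewrite !inE; rewrite !inE in a0Y.
  move=> a y; rewrite !inE => /eqP -> /andP [yx yS].
  apply: F; first by rewrite !inE yx.
  apply/negP => yc; have : y \in A' by rewrite !inE yx yS.
  by rewrite A'0 inE.
exists A', c; split.
- by apply/subsetP => y; rewrite inE => /andP [/(subsetP YS)].
- exact: A'n0.
- by apply/set0Pn; exists x; rewrite !inE xS eqxx.
move=> a z; rewrite in_set => /andP [aY /eqP xa]; rewrite in_setD => /andP [zA' zS].
case: (eqVneq z x) => [->|zx]; first by rewrite sym.
have zY : z \in Y by rewrite !inE zx.
have xz : d x z = e.
  by apply: F => //; apply/negP => zc; move: zA'; rewrite in_set zY zc.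
have xnz : x != z by rewrite eq_sym.
have xna : x != a by apply/eqP => E; rewrite -E in aY; rewrite aY in xY.
case: (boolP (a \in A)) => aA; case: (boolP (z \in A)) => zAA.
- apply: (helperH (w := b0) sym u2 u3 ce xa xz _ _ xb0 xna _ xnz _).
  + by apply: Ac => //; rewrite inE b0A.
  + by rewrite sym; apply: Ac => //; rewrite inE b0A.
  + by apply/eqP => E; rewrite -E in b0Y; rewrite b0Y in xY.
  + by apply/eqP => E; rewrite E zAA in b0A.
- by apply: Ac => //; rewrite inE zAA.
- by rewrite sym; apply: Ac => //; rewrite inE aA.
- apply: (helperH (w := a0) sym u2 u3 ce xa xz _ _ xa0 xna _ xnz _).
  + by rewrite sym; apply: Ac => //; rewrite inE aA.
  + by apply: Ac => //; rewrite inE zAA.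
  + by apply/eqP => E; rewrite -E in a0Y; rewrite a0Y in xY.
  + by apply/eqP => E; rewrite -E a0A in zAA.
Qed.

Definition goods (X : finType) (d : X -> X -> nat) (s : seq X) :=
  forall x y z, x \in s -> y \in s -> z \in s ->
    index x s < index y s -> index y s < index z s ->
    d x y = d y z -> d x z = d x y.

Lemma good_small (X : finType) (d : X -> X -> nat) s : size s <= 1 -> goods d s.
Proof.
move=> hs x y z _ yS _ xy; rewrite -index_mem in yS; have := leq_trans yS hs; rewrite ltnS leqn0 => /eqP E; by rewrite E in xy.
Qed.

Lemma good_cat (X : finType) (d : X -> X -> nat) s1 s2 c :
  goods d s1 -> goods d s2 -> (forall a b, a \in s1 -> b \in s2 -> d a b = c) ->
  goods d (s1 ++ s2).
Proof.
move=> g1 g2 hc x y z; rewrite !mem_cat !index_cat.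
case: (boolP (x \in s1)) => x1; case: (boolP (y \in s1)) => y1;
  case: (boolP (z \in s1)) => z1 //=.
- by move=> _ _ _; apply: g1.
- move=> _ _ z2 _ _ E.
  by rewrite (hc _ _ x1 z2) E (hc _ _ y1 z2).
- move=> _ _ _ _ h; have := index_mem z s1; rewrite z1; move: h; move: (size s1) => m; lia.
- move=> _ y2 z2 _ _ _.
  by rewrite (hc _ _ x1 z2) (hc _ _ x1 y2).
- move=> _ _ _ h; have := index_mem y s1; rewrite y1; move: h; move: (size s1) => m; lia.
- move=> _ _ _ h; have := index_mem y s1; rewrite y1; move: h; move: (size s1) => m; lia.
- move=> _ _ _ _ h; have := index_mem z s1; rewrite z1; move: h; move: (size s1) => m; lia.
- move=> x2 y2 z2 h1 h2.
  apply: g2 => //; move: h1 h2; move: (size s1) => m; lia.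
Qed.

Lemma exists_good (X : finType) (d : X -> X -> nat) :
  (forall x y, d x y = d y x) -> U2 d -> U3 d ->
  forall n (S : {set X}), #|S| <= n -> exists s, [/\ uniq s, s =i S & goods d s].
Proof.
move=> sym u2 u3; elim=> [|n IH] S cS.
  exists (enum S); split; [exact: enum_uniq | exact: mem_enum |].
  by apply: good_small; rewrite -cardE; lia.
case: (leqP #|S| 1) => c1.
  exists (enum S); split; [exact: enum_uniq | exact: mem_enum |].
  by apply: good_small; rewrite -cardE.
have [A [c [AS A0 SA0 Ac]]] := split_ex sym u2 u3 (n := #|S| - 2) (S := S) ltac:(lia).
have cA := cardsID A S; rewrite (setIidPr AS) in cA.
have pA : 0 < #|A| by rewrite card_gt0.
have pB : 0 < #|S :\: A| by rewrite card_gt0.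
have [s1 [u1 e1 g1]] := IH A ltac:(lia).
have [s2 [u2' e2 g2]] := IH (S :\: A) ltac:(lia).
exists (s1 ++ s2); split.
- rewrite cat_uniq u1 u2' andbT /=; apply/hasPn => y; rewrite e2 e1 inE.
  by case/andP.
- by move=> y; rewrite mem_cat e1 e2 inE; case: (boolP (y \in A)) => //= /(subsetP AS).
- apply: (good_cat (c := c)) g1 g2 _ => a b; rewrite e1 e2; exact: Ac.
Qed.


Definition Rel (X : finType) (d : X -> X -> nat) (s : seq X) (i : nat) (u v : X) :=
  (u != v) && (if index u s < index v s then d u v != i else d u v == i).

Lemma Q_lem (X : finType) (d : X -> X -> nat) (s : seq X) i x y z :
  U2 d -> goods d s -> x \in s -> y \in s -> z \in s ->
  index x s < index y s -> index y s < index z s ->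
  ((d x y == i) && (d y z == i) ==> (d x z == i)) &&
  ((d x z == i) ==> (d x y == i) || (d y z == i)).
Proof.
move=> u2 g xs ys zs h1 h2.
have G := g x y z xs ys zs h1 h2.
apply/andP; split; apply/implyP.
  by case/andP => /eqP a /eqP b; rewrite G ?a ?b.
move=> /eqP xz; apply/negPn/negP; rewrite negb_or => /andP [a b].
case: (undup3 (u2 x y z)) => E.
- by rewrite E xz eqxx in a.
- by have := G E; rewrite xz => H; rewrite -H eqxx in a.
- by rewrite -E xz eqxx in b.
Qed.

Lemma Rasym (X : finType) (d : X -> X -> nat) (s : seq X) i u v :
  (forall x y, d x y = d y x) -> (forall x, x \in s) -> Rel d s i u v -> ~~ Rel d s i v u.
Proof.
move=> sym alls; rewrite /Rel (sym v u) => /andP [nuv].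
rewrite [v == u]eq_sym nuv /=.
case: (ltngtP (index u s) (index v s)) => //= h; try by case: (d u v == i).
by move: h => /(index_inj u (alls u) (alls v)) E; rewrite E eqxx in nuv.
Qed.

Lemma Rtot (X : finType) (d : X -> X -> nat) (s : seq X) i u v :
  (forall x y, d x y = d y x) -> (forall x, x \in s) -> u != v ->
  Rel d s i u v || Rel d s i v u.
Proof.
move=> sym alls nuv; rewrite /Rel (sym v u) [v == u]eq_sym nuv /=.
case: (ltngtP (index u s) (index v s)) => h; try by case: (d u v == i).
by move: h => /(index_inj u (alls u) (alls v)) E; rewrite E eqxx in nuv.
Qed.

Lemma Rtrans (X : finType) (d : X -> X -> nat) (s : seq X) i u v w :
  (forall x y, d x y = d y x) -> U2 d -> goods d s -> (forall x, x \in s) ->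
  Rel d s i u v -> Rel d s i v w -> Rel d s i u w.
Proof.
move=> sym u2 g alls Ruv Rvw.
have nuw : u != w.
  by apply/eqP => E; move: Rvw; rewrite -E; apply/negP; apply: Rasym.
have iq : forall a b, (index a s == index b s) = (a == b).
  by move=> a b; apply/eqP/eqP => [/(index_inj a (alls a) (alls b))|->].
have Q : forall x y z, (index x s < index y s) ==> (index y s < index z s) ==>
  (((d x y == i) && (d y z == i) ==> (d x z == i)) &&
  ((d x z == i) ==> (d x y == i) || (d y z == i))).
  move=> x y z; apply/implyP => h1; apply/implyP => h2.
  exact: (Q_lem i u2 g (alls x) (alls y) (alls z) h1 h2).
have Q1 := Q u v w; have Q2 := Q u w v; have Q3 := Q v u w;
have Q4 := Q v w u; have Q5 := Q w u v; have Q6 := Q w v u.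
move: Ruv Rvw Q1 Q2 Q3 Q4 Q5 Q6; rewrite /Rel nuw ?(sym v u) ?(sym w v) ?(sym w u).
move=> /andP [nuv c1] /andP [nvw c2]; move: c1 c2.
have iuv := iq u v; have ivw := iq v w; have iuw := iq u w.
rewrite (negbTE nuv) in iuv; rewrite (negbTE nvw) in ivw; rewrite (negbTE nuw) in iuw.
move: iuv ivw iuw.
case: (ltngtP (index u s) (index v s)) => h1 //;
case: (ltngtP (index v s) (index w s)) => h2 //;
case: (ltngtP (index u s) (index w s)) => h3 //; try (exfalso; lia);
move=> _ _ _; move: (d u v == i) (d v w == i) (d u w == i) => [] [] [] //=.
Qed.

Unset Implicit Arguments.
Theorem corollary6p4 (X : finType) (k : nat) (d : X -> X -> nat) :
  0 < #|X| -> symbolic_ultrametric k d ->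
  complete_edge_colored_perm_graph k (graph_rep_class d).
Proof.
move=> X0 [rng surj sym u2 u3].
have [s [us es g]] := exists_good sym u2 u3 (n := #|X|) (S := [set: X])
   ltac:(by rewrite cardsT).
have alls : forall x, x \in s by move=> x; rewrite es inE.
have ss : size s = #|X|.
  by rewrite -(card_uniqP us); apply: eq_card => x; rewrite alls.
have lb : forall x, index x s < #|X| by move=> x; rewrite -ss index_mem.
pose l := fun x => @Ordinal #|X| (index x s) (lb x).
have linj : injective l.
  by move=> x y /(congr1 val) /= /(index_inj x (alls x) (alls y)).
have lbij : bijective l by apply: inj_card_bij linj _; rewrite card_ord.
exists l; split => //.
case: lbij => h lh hl.
pose posn i u := #|[set w | Rel d s i w u]|.
have pb : forall i u, posn i u < #|X|.
  move=> i u; rewrite -cardsT; apply: proper_card; apply/properP; split.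
    exact: subsetT.
  by exists u; rewrite !inE /Rel ?eqxx.
have plt : forall i u v, Rel d s i u v -> posn i u < posn i v.
  move=> i u v Ruv; apply: proper_card; apply/properP; split.
    apply/subsetP => w; rewrite !inE => Rwu; exact: (Rtrans sym u2 g alls Rwu Ruv).
  by exists u; rewrite !inE /Rel ?eqxx.
have piff : forall i u v, (posn i u < posn i v) = Rel d s i u v.
  move=> i u v; apply/idP/idP; last exact: plt.
  case: (eqVneq u v) => [->|nuv]; first by rewrite ltnn.
  case/orP: (Rtot i sym alls nuv) => // Rvu /ltnW.
  by rewrite leqNgt plt.
pose posO i u := @Ordinal #|X| (posn i u) (pb i u).
have pinj : forall i, injective (posO i).
  move=> i u v /(congr1 val) /= E; apply/eqP; apply/negPn/negP => nuv.
  by case/orP: (Rtot i sym alls nuv) => /plt; rewrite E ltnn.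
exists (fun i => (perm (inj_comp (pinj i) (can_inj hl)))^-1)%g.
move=> i _ u v luv; rewrite invgK !permE /= !lh piff /Rel /graph_rep_class.
move: luv => /= luv; rewrite ltnNge (ltnW luv) /=.
by [].
Qed.
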